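(* For $n\ge 1$, the subtree number indices of the polyphenylene ortho-chain $\overline{O}_n$, meta-chain $\overline{M}_n$ and para-chain $\overline{P}_n$ with $n$ hexagons are \[ \mathrm{STN}(\overline{O}_n)=\frac{49(16^{n}-1)}{25}+\frac{33n}{5},\quad \mathrm{STN}(\overline{M}_n)=\frac{49(13^{n}-1)}{16}-\frac{3n}{4},\quad \mathrm{STN}(\overline{P}_n)=\frac{441(12^{n}-1)}{121}-\frac{45n}{11}. \]
   Context: For a graph $G$, $\mathrm{STN}(G)$ is the number of nonempty subtrees of $G$ (subgraphs that are trees, single vertices included). A polyphenylene chain with $n$ hexagons consists of pairwise vertex-disjoint hexagons (6-cycles) $H_1,\dots,H_n$, where for each $i=1,\dots,n-1$ one vertex of $H_i$ is joined to one vertex of $H_{i+1}$ by a single cut edge, and there are no other edges. For $2\le i\le n-1$, $H_i$ has two distinct vertices incident to cut edges. The ortho-chain $\overline{O}_n$ (resp. meta-chain $\overline{M}_n$, para-chain $\overline{P}_n$) is the polyphenylene chain in which, for every $2\le i\le n-1$, these two vertices are at distance $1$ (resp. $2$, $3$) in $H_i$. *)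

(* Defs.v *)
From mathcomp Require Import all_boot all_order all_algebra.
Set Implicit Arguments. Unset Strict Implicit. Unset Printing Implicit Defensive.

Section Subtrees.
Variable V : finType.
Variable e : rel V. (* adjacency relation of a simple graph (symmetric, irreflexive) *)

Definition is_edge (f : {set V}) : bool :=
  [exists u, exists v, (u != v) && e u v && (f == [set u; v])].

Definition sub_adj (S : {set V}) (F : {set {set V}}) : rel V :=
  [rel u v | [&& u \in S, v \in S, u != v & [set u; v] \in F]].

Definition is_subgraph (S : {set V}) (F : {set {set V}}) : bool :=
  [forall f in F, is_edge f && (f \subset S)].

Definition sub_connected (S : {set V}) (F : {set {set V}}) : bool :=
  [forall u in S, forall v in S, connect (sub_adj S F) u v].

(* a cycle: a closed walk on k >= 3 pairwise distinct vertices; since the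
   vertices are distinct, k <= #|V|, so we quantify over k-tuples, k <= #|V| *)
Definition sub_acyclic (S : {set V}) (F : {set {set V}}) : bool :=
  [forall k : 'I_(#|V|.+1), forall c : k.-tuple V,
     (3 <= k) ==> ~~ ucycleb (sub_adj S F) c].

Definition is_subtree (S : {set V}) (F : {set {set V}}) : bool :=
  [&& S != set0, is_subgraph S F, sub_connected S F & sub_acyclic S F].

Definition STN : nat :=
  #| [set p : {set V} * {set {set V}} | is_subtree p.1 p.2 ] |.
End Subtrees.

(* Vertex k of 'I_(6*n) is vertex (k %% 6) of hexagon H_(k %/ 6) (0-based).
   Hexagon edges: positions a, a+1 mod 6.  Cut edge between H_i and H_(i+1):
   position d of H_i joined to position 0 of H_(i+1).  Hence for every inner
   hexagon the two cut vertices (positions 0 and d) are at distance d in it. *)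
Definition chain_adj (d n : nat) : rel 'I_(6 * n) :=
  [rel u v : 'I_(6 * n) |
    let i := (u %/ 6)%N in let j := (v %/ 6)%N in
    let a := (u %% 6)%N in let b := (v %% 6)%N in
    [|| (i == j) && ((a == (b + 1) %% 6) || (b == (a + 1) %% 6)),
        [&& j == i.+1, a == d & b == 0]
      | [&& i == j.+1, b == d & a == 0] ] ].

Definition ortho_chain_STN (n : nat) : nat := STN (@chain_adj 1 n).
Definition meta_chain_STN  (n : nat) : nat := STN (@chain_adj 2 n).
Definition para_chain_STN  (n : nat) : nat := STN (@chain_adj 3 n).

(* Main.v *)
Require Import Defs.
From mathcomp Require Import all_boot all_order all_algebra.
From mathcomp Require Import ring lra.
From mathcomp Require Import zify.
From Stdlib Require Import FunctionalExtensionality.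
Set Implicit Arguments. Unset Strict Implicit. Unset Printing Implicit Defensive.

Section CycleLemmas.
Variable T : finType.
Implicit Types (c : seq T) (r : rel T).

Lemma iter_next_in c x i : x \in c -> iter i (next c) x \in c.
Proof. by move=> xc; elim: i => //= i IH; rewrite mem_next. Qed.

Lemma two_cycle c x : uniq c -> x \in c -> next c (next c x) = x -> size c <= 2.
Proof.
move=> Uc xc nn.
have fc := cycle_next Uc.
have H : {subset c <= [:: x; next c x]}.
  move=> y yc.
  have : fconnect (next c) x y by rewrite (fconnect_cycle fc xc).
  rewrite fconnect_orbit => /trajectP[i _ ->].
  elim: i => [|i IH]; first by rewrite mem_head.
  rewrite iterS; move: IH; rewrite !inE => /orP[/eqP->|/eqP->];
    by rewrite ?nn eqxx ?orbT.
by have := uniq_leq_size Uc H.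
Qed.

Lemma trans_iter (f : T -> T) (Q : pred T) x n :
  Q x -> ~~ Q (iter n f x) -> exists2 i, i < n & Q (iter i f x) && ~~ Q (iter i.+1 f x).
Proof.
move=> Qx; elim: n => [|n IH] /=; first by rewrite Qx.
case: (boolP (Q (iter n f x))) => [Qn nQ|nQn _].
  by exists n => //; rewrite Qn nQ.
by case: (IH nQn) => i lt_in Hi; exists i => //; apply: ltnW.
Qed.

Lemma cycle_side r (P : pred T) u v c :
  symmetric r -> uniq c -> cycle r c -> 2 < size c ->
  (forall a b, a \in c -> r a b -> P a -> ~~ P b -> a = u /\ b = v) ->
  forall x y, x \in c -> y \in c -> P x -> P y.
Proof.
move=> rsym Uc cc sz cross x y xc yc Px; apply/negPn/negP => nPy.
have fc := cycle_next Uc.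
have iterc : forall a b, a \in c -> b \in c -> exists i, b = iter i (next c) a.
  move=> a b ac bc.
  have : fconnect (next c) a b by rewrite (fconnect_cycle fc ac).
  by rewrite fconnect_orbit => /trajectP[i _ ->]; exists i.
have [i yi] := iterc _ _ xc yc.
have nPy' := nPy; rewrite yi in nPy'.
have [j _ /andP[Pt nPt]] := trans_iter (f := next c) (Q := P) Px nPy'.
have tc := iter_next_in j xc.
have [tu ntv] := cross _ _ tc (next_cycle cc tc) Pt nPt.
have [i' xi] := iterc _ _ yc xc.
have nPx : ~~ (predC P) (iter i' (next c) y) by rewrite /= -xi Px.
have [j' _ /andP[Pt' nPt']] := trans_iter (f := next c) (Q := predC P) nPy nPx.
rewrite /= negbK in Pt' nPt'.
have tc' := iter_next_in j' yc.
have ntc' : next c (iter j' (next c) y) \in c by rewrite mem_next.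
have r' : r (next c (iter j' (next c) y)) (iter j' (next c) y) by rewrite rsym; apply: next_cycle.
have [tu' ntv'] := cross _ _ ntc' r' nPt' Pt'.
have uc : u \in c by rewrite -tu.
have : next c (next c u) = u.
  by rewrite -{1}tu ntv -tu' ntv'.
by move/(two_cycle Uc uc); rewrite leqNgt sz.
Qed.

Lemma cycle_pot r (pos : T -> nat) c :
  uniq c -> cycle r c -> 2 < size c ->
  {in c &, injective pos} ->
  (forall a b, a \in c -> r a b -> pos b = (pos a).+1 \/ pos a = (pos b).+1) -> False.
Proof.
move=> Uc cc sz pinj step.
have [x0 x0c] : exists x0, x0 \in c by case: c Uc cc sz pinj step => // a l; exists a; rewrite mem_head.
case: (@arg_maxnP _ x0 (mem c) pos x0c) => x xc xmax.
have nc : next c x \in c by rewrite mem_next.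
have pc : prev c x \in c by rewrite mem_prev.
have h1 := step _ _ xc (next_cycle cc xc).
have h2 := step _ _ pc (prev_cycle cc xc).
have m1 := xmax _ nc; have m2 := xmax _ pc.
have eqp : pos (next c x) = pos (prev c x) by lia.
have := pinj _ _ nc pc eqp => enp.
have := two_cycle Uc xc; rewrite enp (next_prev Uc) => /(_ erefl).
by rewrite leqNgt sz.
Qed.
End CycleLemmas.

Lemma connect_map (T U : finType) (r : rel T) (r' : rel U) (f : T -> U) :
  (forall x y, r x y -> r' (f x) (f y)) ->
  forall x y, connect r x y -> connect r' (f x) (f y).
Proof.
move=> H x y /connectP[p pp ->]; elim: p x pp => [|z p IH] x /=.
  by rewrite connect0.
by case/andP=> rxz pz; apply: connect_trans (connect1 (H _ _ rxz)) (IH _ pz).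
Qed.

Section Graph.
Variable V : finType.
Variable e : rel V.
Hypothesis esym : symmetric e.

Definition Tr (X W : {set V}) : {set {set V} * {set {set V}}} :=
  [set p | [&& is_subtree e p.1 p.2, p.1 \subset X & W \subset p.1]].

Lemma set2_eq (a b c d : V) : a != b -> [set a; b] = [set c; d] ->
  (a = c /\ b = d) \/ (a = d /\ b = c).
Proof.
move=> ab E.
have : a \in [set c; d] by rewrite -E !inE eqxx.
have : b \in [set c; d] by rewrite -E !inE eqxx orbT.
rewrite !inE => /orP[/eqP bc|/eqP bd] /orP[/eqP ac|/eqP ad].
- by rewrite ac bc eqxx in ab.
- by right.
- by left.
- by rewrite ad bd eqxx in ab.
Qed.

Lemma subadj_sym (S : {set V}) (F : {set {set V}}) : symmetric (sub_adj S F).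
Proof.
move=> a b; rewrite /sub_adj /= eq_sym [[set b; a]]setUC.
by case: (a \in S); case: (b \in S).
Qed.

Lemma subadj_e (S : {set V}) F a b : is_subgraph e S F -> sub_adj S F a b -> e a b.
Proof.
move=> /forallP sg /and4P[aS bS ab abF].
have /andP[/existsP[x /existsP[y /andP[/andP[xy exy] /eqP E]]] _] := implyP (sg _) abF.
by case: (set2_eq ab E) => [[-> ->]|[-> ->]] //; rewrite esym.
Qed.

Lemma path_cross (r : rel V) (P : pred V) x p :
  path r x p -> P x -> ~~ P (last x p) -> exists a b, [/\ r a b, P a & ~~ P b].
Proof.
elim: p x => [|y p IH] x /=; first by move=> _ ->.
case/andP => rxy pp Px; case: (boolP (P y)) => Py; first exact: IH.
by move=> _; exists x, y.
Qed.

Lemma conn_restrict (S : {set V}) F (X : {set V}) w0 x y :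
  (forall a b, sub_adj S F a b -> a \in X -> b \notin X -> a = w0) ->
  x \in X -> y \in X -> connect (sub_adj S F) x y ->
  connect (sub_adj (S :&: X) [set f in F | f \subset X]) x y.
Proof.
move=> cr xX yX /connectP[p pp Ey]; subst y.
set r' := sub_adj _ _.
suff H : forall z, path (sub_adj S F) z p -> (z \in X -> connect r' x z) ->
    (z \notin X -> connect r' x w0) -> last z p \in X -> connect r' x (last z p).
  by apply: H => // /negP.
elim: p {pp yX} => [|w p IH] z /=; first by move=> _ H1 _ /H1.
case/andP => rzw pw H1 H2; apply: IH => // [wX | wnX].
- case: (boolP (z \in X)) => zX.
  + apply: connect_trans (H1 zX) (connect1 _).
    move: rzw; rewrite /r' /sub_adj /= !inE => /and4P[-> -> -> ->].
    by rewrite zX wX subUset !sub1set zX wX.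
  + have wz : sub_adj S F w z by rewrite subadj_sym.
    by rewrite (cr _ _ wz wX zX); exact: H2.
- case: (boolP (z \in X)) => zX.
  + by rewrite -(cr _ _ rzw zX wnX); exact: H1.
  + exact: H2.
Qed.

Lemma sadj_mem (S : {set V}) F a b : sub_adj S F a b -> (a \in S) && (b \in S).
Proof. by case/and4P => -> ->. Qed.

Lemma tree_restrict (S : {set V}) (F : {set {set V}}) (X : {set V}) w0 :
  is_subtree e S F -> w0 \in S -> w0 \in X ->
  (forall a b, sub_adj S F a b -> a \in X -> b \notin X -> a = w0) ->
  is_subtree e (S :&: X) [set f in F | f \subset X].
Proof.
move=> /and4P[ne sg cn ac] w0S w0X cr.
have sr : subrel (sub_adj (S :&: X) [set f in F | f \subset X]) (sub_adj S F).
  move=> a b; rewrite /sub_adj /= !inE.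
  by case/and4P => /andP[-> _] /andP[-> _] -> /andP[-> _].
apply/and4P; split.
- by apply/set0Pn; exists w0; rewrite inE w0S.
- apply/forallP => f; apply/implyP; rewrite inE => /andP[fF fX].
  have /andP[-> fS] := implyP (forallP sg f) fF.
  by rewrite subsetI fS.
- apply/forallP => x; apply/implyP; rewrite inE => /andP[xS xX].
  apply/forallP => y; apply/implyP; rewrite inE => /andP[yS yX].
  apply: (conn_restrict cr xX yX).
  exact: (implyP (forallP (implyP (forallP cn x) xS) y) yS).
- apply/forallP => k; apply/forallP => c; apply/implyP => k3.
  have := implyP (forallP (forallP ac k) c) k3; apply: contra.
  by case/andP => cy uc; rewrite /ucycleb uc (sub_cycle sr cy).
Qed.

Section Bridge.
Variables (A B : {set V}) (u v : V).
Hypotheses (dAB : [disjoint A & B]) (uA : u \in A) (vB : v \in B) (euv : e u v)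
  (bridge : forall a b, a \in A -> b \in B -> e a b -> a = u /\ b = v).

Lemma notAB x : x \in A -> x \in B -> False.
Proof. by move=> xA; rewrite (disjointFr dAB xA). Qed.

Lemma uv_neq : u != v.
Proof. by apply/eqP => E; apply: (notAB uA); rewrite E. Qed.

Lemma restr_adj (S1 : {set V}) (F1 : {set {set V}}) (S2 : {set V}) (F2 : {set {set V}}) (X Y : {set V}) (a b : V) :
  S1 \subset X -> S2 \subset Y -> (forall z, z \in X -> z \in Y -> False) ->
  is_subgraph e S2 F2 -> ~~ ([set u; v] \subset X) ->
  a \in X -> b \in X ->
  sub_adj (S1 :|: S2) (F1 :|: F2 :|: [set [set u; v]]) a b -> sub_adj S1 F1 a b.
Proof.
move=> s1 s2 dXY sg2 nuv aX bX /and4P[aS bS ab abF].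
have nS2 : forall z, z \in X -> z \notin S2.
  by move=> z zX; apply/negP => /(subsetP s2) zY; apply: (dXY z).
rewrite /sub_adj /= ab.
move: aS bS; rewrite !inE (negbTE (nS2 _ aX)) (negbTE (nS2 _ bX)) !orbF => -> -> /=.
move: abF; rewrite !inE => /orP[/orP[//|abF2]|/eqP E].
- have /andP[_ /subsetP sab] := implyP (forallP sg2 _) abF2.
  by have := nS2 _ aX; rewrite sab // !inE eqxx.
- by move: nuv; rewrite -E subUset !sub1set aX bX.
Qed.

Lemma tree_union (S1 : {set V}) (F1 : {set {set V}}) (S2 : {set V}) (F2 : {set {set V}}) :
  is_subtree e S1 F1 -> S1 \subset A -> u \in S1 ->
  is_subtree e S2 F2 -> S2 \subset B -> v \in S2 ->
  is_subtree e (S1 :|: S2) (F1 :|: F2 :|: [set [set u; v]]).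
Proof.
move=> t1 sA uS t2 sB vS.
move: (t1) (t2) => /and4P[ne1 sg1 cn1 ac1] /and4P[ne2 sg2 cn2 ac2].
set S := S1 :|: S2; set F := F1 :|: F2 :|: _.
have sgU : is_subgraph e S F.
  apply/forallP => f; apply/implyP; rewrite !inE => /orP[/orP[fF|fF]|/eqP->].
  - have /andP[-> fS] := implyP (forallP sg1 f) fF.
    exact: subset_trans fS (subsetUl _ _).
  - have /andP[-> fS] := implyP (forallP sg2 f) fF.
    exact: subset_trans fS (subsetUr _ _).
  - apply/andP; split; last by rewrite subUset !sub1set !inE uS vS orbT.
    by apply/existsP; exists u; apply/existsP; exists v; rewrite uv_neq euv eqxx.
have r1 : subrel (sub_adj S1 F1) (sub_adj S F).
  by move=> a b /and4P[aS bS ab abF]; rewrite /sub_adj /= !inE aS bS ab abF.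
have r2 : subrel (sub_adj S2 F2) (sub_adj S F).
  by move=> a b /and4P[aS bS ab abF]; rewrite /sub_adj /= !inE aS bS ab abF !orbT.
have ruv : sub_adj S F v u.
  by rewrite /sub_adj /= !inE uS vS eq_sym uv_neq setUC eqxx !orbT.
have toU : forall x, x \in S -> connect (sub_adj S F) x u.
  move=> x; rewrite inE => /orP[xS|xS].
  - apply: (connect_map (f := id) r1).
    exact: (implyP (forallP (implyP (forallP cn1 x) xS) u) uS).
  - apply: (@connect_trans _ _ v x u); last exact: connect1 ruv.
    apply: (connect_map (f := id) r2).
    exact: (implyP (forallP (implyP (forallP cn2 x) xS) v) vS).
apply/and4P; split => //.
- by apply/set0Pn; exists u; rewrite inE uS.
- apply/forallP => x; apply/implyP => xS; apply/forallP => y; apply/implyP => yS.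
  apply: connect_trans (toU _ xS) _.
  by rewrite (sym_connect_sym (@subadj_sym S F)); apply: toU.
apply/forallP => k; apply/forallP => c; apply/implyP => k3; apply/negP.
case/andP => cy uc.
have szc : 2 < size c by rewrite size_tuple.
have cS : forall x, x \in c -> x \in S.
  by move=> x xc; have /andP[] := sadj_mem (next_cycle cy xc).
have cross : forall a b, a \in c -> sub_adj S F a b -> a \in A -> b \notin A -> a = u /\ b = v.
  move=> a b _ rab aA bnA; apply: bridge => //; last exact: subadj_e sgU rab.
  have /andP[_] := sadj_mem rab; rewrite inE => /orP[bS1|]; last by move/(subsetP sB).
  by rewrite (subsetP sA _ bS1) in bnA.
have side := cycle_side (P := mem A) (@subadj_sym S F) uc cy szc cross.
have [x0 x0c] : exists x0, x0 \in c.
  by exists (nth u c 0); apply: mem_nth; apply: leq_ltn_trans szc.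
case: (boolP (x0 \in A)) => x0A.
- have cA : all (mem A) c by apply/allP => y yc; exact: side x0 y x0c yc x0A.
  have := implyP (forallP (forallP ac1 k) c) k3; apply/negP; apply/negPn.
  rewrite /ucycleb uc andbT; apply: (sub_in_cycle _ cA cy).
  move=> a b aA bA; apply: (restr_adj sA sB notAB sg2) => //.
  by rewrite subUset !sub1set negb_and (disjointFl dAB vB) orbT.
- have cB : all (mem B) c.
    apply/allP => y yc; case: (boolP (y \in A)) => yA.
      by have := side y x0 yc x0c yA; rewrite /= (negbTE x0A).
    by move: (cS _ yc); rewrite inE => /orP[/(subsetP sA)|/(subsetP sB)]; rewrite ?(negbTE yA).
  have := implyP (forallP (forallP ac2 k) c) k3; apply/negP; apply/negPn.
  rewrite /ucycleb uc andbT; apply: (sub_in_cycle _ cB cy).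
  move=> a b aB bB; rewrite /S /F [S1 :|: _]setUC [F1 :|: _]setUC.
  apply: (restr_adj sB sA (fun z zB zA => notAB zA zB) sg1) => //.
  by rewrite subUset !sub1set negb_and (disjointFr dAB uA).
Qed.

Definition phi (q : ({set V} * {set {set V}}) * ({set V} * {set {set V}})) :=
  (q.1.1 :|: q.2.1, q.1.2 :|: q.2.2 :|: [set [set u; v]]).
Definition psi (X : {set V}) (p : {set V} * {set {set V}}) :=
  (p.1 :&: X, [set f in p.2 | f \subset X]).

Lemma edge_mem (f : {set V}) : is_edge e f -> exists a, a \in f.
Proof.
by case/existsP => a /existsP[b /andP[_ /eqP->]]; exists a; rewrite !inE eqxx.
Qed.

Lemma psi_phi (S1 : {set V}) (F1 : {set {set V}}) (S2 : {set V}) (F2 : {set {set V}})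
  (X Y : {set V}) :
  S1 \subset X -> S2 \subset Y -> (forall z, z \in X -> z \in Y -> False) ->
  is_subgraph e S1 F1 -> is_subgraph e S2 F2 -> ~~ ([set u; v] \subset X) ->
  psi X (phi ((S1, F1), (S2, F2))) = (S1, F1).
Proof.
move=> s1 s2 dXY sg1 sg2 nuv; rewrite /psi /phi /=; congr (_, _).
  apply/setP => x; rewrite !inE; apply/idP/idP => [/andP[/orP[//|xS2] xX]|xS1].
    by case: (dXY x xX (subsetP s2 _ xS2)).
  by rewrite xS1 (subsetP s1 _ xS1).
apply/setP => f; rewrite !inE; apply/idP/idP => [/andP[/orP[/orP[//|fF2]|/eqP fuv] fX]|fF1].
- have /andP[ef fS] := implyP (forallP sg2 f) fF2.
  have [a af] := edge_mem ef.
  by case: (dXY a (subsetP fX _ af) (subsetP s2 _ (subsetP fS _ af))).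
- by rewrite -fuv fX in nuv.
- have /andP[_ fS] := implyP (forallP sg1 f) fF1.
  by rewrite fF1 (subset_trans fS s1).
Qed.

Lemma cross_A (S : {set V}) (F : {set {set V}}) :
  is_subgraph e S F -> S \subset A :|: B ->
  forall a b, sub_adj S F a b -> a \in A -> b \notin A -> a = u.
Proof.
move=> sg sAB a b rab aA bnA.
have /andP[_ bS] := sadj_mem rab.
have : b \in A :|: B by apply: (subsetP sAB).
rewrite inE (negbTE bnA) /= => bB.
by case: (bridge aA bB (subadj_e sg rab)).
Qed.

Lemma cross_B (S : {set V}) (F : {set {set V}}) :
  is_subgraph e S F -> S \subset A :|: B ->
  forall a b, sub_adj S F a b -> a \in B -> b \notin B -> a = v.
Proof.
move=> sg sAB a b rab aB bnB.
have /andP[_ bS] := sadj_mem rab.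
have : b \in A :|: B by apply: (subsetP sAB).
rewrite inE (negbTE bnB) orbF => bA.
have eba : e b a by rewrite esym; exact: subadj_e sg rab.
by case: (bridge bA aB eba).
Qed.

Lemma decomp (S : {set V}) (F : {set {set V}}) :
  is_subtree e S F -> S \subset A :|: B -> ~~ (S \subset A) -> ~~ (S \subset B) ->
  [/\ u \in S, v \in S & [set u; v] \in F].
Proof.
move=> /and4P[ne sg cn ac] sAB nSA nSB.
have [x xS xnB] := subsetPn nSB.
have [y yS ynA] := subsetPn nSA.
have xA : x \in A by move: (subsetP sAB _ xS); rewrite inE (negbTE xnB) orbF.
have := implyP (forallP (implyP (forallP cn x) xS) y) yS.
case/connectP => p pp Ey.
have ynA' : ~~ (fun z => z \in A) (last x p) by rewrite /= -Ey.
have [a [b [rab /= aA bnA]]] := path_cross (P := fun z => z \in A) pp xA ynA'.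
have au := cross_A sg sAB rab aA bnA.
have /andP[_ bS] := sadj_mem rab.
have bB : b \in B by move: (subsetP sAB _ bS); rewrite inE (negbTE bnA).
have [_ bv] := bridge aA bB (subadj_e sg rab).
by move: rab; rewrite au bv => /and4P[-> -> _ ->].
Qed.

Lemma bridge_card (W : {set V}) : W \subset B ->
  #|[set p in Tr (A :|: B) W | ~~ (p.1 \subset A) && ~~ (p.1 \subset B)]| =
  #|Tr A [set u]| * #|Tr B (v |: W)|.
Proof.
move=> WB; rewrite -cardsX.
set D := setX _ _.
have dBA : forall z, z \in B -> z \in A -> False by move=> z zB zA; exact: notAB zA zB.
have nuvA : ~~ ([set u; v] \subset A) by rewrite subUset !sub1set negb_and (disjointFl dAB vB) orbT.
have nuvB : ~~ ([set u; v] \subset B) by rewrite subUset !sub1set negb_and (disjointFr dAB uA).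
have inv : forall q, q \in D -> (psi A (phi q), psi B (phi q)) = q.
  move=> [[S1 F1] [S2 F2]]; rewrite !inE /= => /andP[/and3P[t1 sA _] /and3P[t2 sB _]].
  move: (t1) (t2) => /and4P[_ sg1 _ _] /and4P[_ sg2 _ _].
  rewrite (psi_phi sA sB notAB) //; congr (_, _).
  have -> : phi (S1, F1, (S2, F2)) = phi (S2, F2, (S1, F1)).
    by rewrite /phi /= setUC [F1 :|: _]setUC.
  by rewrite (psi_phi sB sA dBA).
rewrite -(card_in_imset (f := phi)); last first.
  by move=> q1 q2 q1D q2D E; rewrite -(inv _ q1D) -(inv _ q2D) E.
apply: eq_card => -[S F]; rewrite !inE /=.
apply/idP/idP.
- case/andP => /and3P[t sAB WS] /andP[nSA nSB].
  move: (t) => /and4P[_ sg _ _].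
  have [uS vS uvF] := decomp t sAB nSA nSB.
  apply/imsetP; exists (psi A (S, F), psi B (S, F)).
    rewrite !inE /=.
    rewrite (tree_restrict t uS uA (cross_A sg sAB)) (tree_restrict t vS vB (cross_B sg sAB)).
    rewrite !subsetIr /= !sub1set !inE uS uA /=.
    by rewrite subUset sub1set inE vS vB subsetI WS WB.
  rewrite /phi /psi /=; congr (_, _).
    by rewrite -setIUr (setIidPl sAB).
  apply/setP => f; rewrite !inE; apply/idP/idP; last first.
    by case/orP => [/orP[/andP[-> _]|/andP[-> _]]|/eqP->].
  move=> fF; have /andP[/existsP[a /existsP[b /andP[/andP[ab eab] /eqP fE]]] fS] := implyP (forallP sg f) fF.
  rewrite fF /=.
  have aS : a \in A :|: B by apply: (subsetP sAB); apply: (subsetP fS); rewrite fE !inE eqxx.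
  have bS : b \in A :|: B by apply: (subsetP sAB); apply: (subsetP fS); rewrite fE !inE eqxx orbT.
  move: aS bS; rewrite !inE.
  case: (boolP (a \in A)) => aA; case: (boolP (b \in A)) => bA /= aB bB.
  + by rewrite fE subUset !sub1set aA bA.
  + by have [au bv] := bridge aA bB eab; rewrite fE au bv eqxx !orbT.
  + have eba : e b a by rewrite esym.
    by have [bu av] := bridge bA aB eba; rewrite fE bu av setUC eqxx !orbT.
  + by rewrite fE [_ \subset B]subUset !sub1set aB bB !orbT.
- case/imsetP => [[[S1 F1] [S2 F2]]]; rewrite !inE /= => /andP[/and3P[t1 sA uS] /and3P[t2 sB vWS]] [-> ->].
  rewrite sub1set in uS; rewrite subUset sub1set in vWS; case/andP: vWS => vS WS.
  rewrite tree_union //= setUSS //= (subset_trans WS (subsetUr _ _)) /=.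
  apply/andP; split; apply/negP => H.
    * by apply: (notAB (subsetP H v _) vB); rewrite inE vS orbT.
    * by apply: (notAB uA (subsetP H u _)); rewrite inE uS.
Qed.

Lemma bridge_count (W : {set V}) : W \subset B ->
  #|Tr (A :|: B) W| = #|Tr A W| + #|Tr B W| + #|Tr A [set u]| * #|Tr B (v |: W)|.
Proof.
move=> WB; rewrite -bridge_card //.
set T := Tr (A :|: B) W.
rewrite -(cardsID [set p : {set V} * {set {set V}} | p.1 \subset A] T).
rewrite -(cardsID [set p : {set V} * {set {set V}} | p.1 \subset B] (T :\: _)).
rewrite addnA.
congr (_ + _ + _); apply: eq_card => -[S F]; rewrite !inE /=.
- case sA: (S \subset A); rewrite ?andbF ?andbT //=.
  by rewrite (subset_trans sA (subsetUl A B)).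
- case sB: (S \subset B); rewrite ?andbF ?andbT //=.
  rewrite (subset_trans sB (subsetUr A B)).
  case t: (is_subtree e S F) => //=; rewrite ?andbF //.
  suff -> : ~~ (S \subset A) by [].
  apply/negP => sA; move: t => /and4P[/set0Pn[x xS] _ _ _].
  exact: notAB (subsetP sA _ xS) (subsetP (idP sB) _ xS).
- by case: (S \subset A); case: (S \subset B); case: (is_subtree e S F);
    case: (S \subset A :|: B); case: (W \subset S).
Qed.

End Bridge.
End Graph.

Definition enum6 : seq 'I_6 := [:: @Ordinal 6 0 isT; @Ordinal 6 1 isT; @Ordinal 6 2 isT;
  @Ordinal 6 3 isT; @Ordinal 6 4 isT; @Ordinal 6 5 isT].
Lemma mem_enum6 i : i \in enum6.
Proof. by case: i => -[|[|[|[|[|[|k]]]]]] Hk. Qed.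
Lemma size_enum6 : size enum6 = 6. Proof. by []. Qed.

Definition sc (i : 'I_6) : 'I_6 := ordS i.
Definition adj6 (s f : pred 'I_6) : rel 'I_6 :=
  fun i j => [&& s i, s j, i != j &
     ((j == sc i) && f i) || ((i == sc j) && f j)].
Definition step6 (r : rel 'I_6) (R : seq 'I_6) : seq 'I_6 :=
  R ++ [seq z <- enum6 | (z \notin R) && has (fun w => r w z) R].
Definition reach6 (r : rel 'I_6) (x : 'I_6) : seq 'I_6 := iter 6 (step6 r) [:: x].
Definition conn6 (s f : pred 'I_6) : bool :=
  if [seq i <- enum6 | s i] is x0 :: _ then
    let R := reach6 (adj6 s f) x0 in all (fun j => s j ==> (j \in R)) enum6
  else true.
Definition tree6c (s f : pred 'I_6) : bool :=
  [&& has s enum6, all (fun i => f i ==> s i && s (sc i)) enum6, conn6 s f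
    & has (fun i => ~~ f i) enum6].

Lemma step6_mem r R z : (z \in step6 r R) = (z \in R) || has (fun w => r w z) R.
Proof. by rewrite mem_cat mem_filter mem_enum6 andbT; case: (z \in R). Qed.

Lemma reach_conn_k r x k y : y \in iter k (step6 r) [:: x] -> connect r x y.
Proof.
elim: k y => [|k IH] y /=.
  by rewrite inE => /eqP->; exact: connect0.
rewrite step6_mem => /orP[/IH//|/hasP[w wR rwy]].
exact: connect_trans (IH _ wR) (connect1 rwy).
Qed.

Lemma reach_conn r x y : y \in reach6 r x -> connect r x y.
Proof. exact: reach_conn_k. Qed.

Lemma iter_step_mono r x k k' : k <= k' ->
  {subset iter k (step6 r) [:: x] <= iter k' (step6 r) [:: x]}.
Proof.
move=> /subnKC <-; elim: (k' - k) => [|j IH] y; first by rewrite addn0.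
by rewrite addnS /= step6_mem => /IH ->.
Qed.

Lemma path_reach r x p : path r x p -> last x p \in iter (size p) (step6 r) [:: x].
Proof.
elim/last_ind: p => [|q z IH]; first by rewrite /= inE eqxx.
rewrite rcons_path last_rcons size_rcons => /andP[pq rz] /=.
rewrite step6_mem; case: (z \in _) => //=.
by apply/hasP; exists (last x q) => //; exact: IH.
Qed.

Lemma conn_reach r x y : connect r x y -> y \in reach6 r x.
Proof.
case/connectP => p pp ->; case: (shortenP pp) => p' pp' up' _.
apply: (iter_step_mono (k := size p')); last exact: path_reach.
have : size (x :: p') <= size enum6.
  by apply: uniq_leq_size up' _ => z _; exact: mem_enum6.
rewrite size_enum6 /=; exact: ltnW.
Qed.

Lemma adj6_sym s f : symmetric (adj6 s f).
Proof.
move=> i j; rewrite /adj6 eq_sym.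
by case: (s i); case: (s j); rewrite //= orbC.
Qed.

Lemma conn6_ok s f :
  conn6 s f = [forall i, forall j, s i ==> s j ==> connect (adj6 s f) i j].
Proof.
rewrite /conn6; case E: [seq i <- enum6 | s i] => [|x0 l].
  apply/esym/forallP => i; apply/forallP => j.
  have : i \notin [seq i <- enum6 | s i] by rewrite E.
  by rewrite mem_filter mem_enum6 andbT => /negbTE->.
have : x0 \in [seq i <- enum6 | s i] by rewrite E mem_head.
rewrite mem_filter mem_enum6 andbT => sx0.
change (all (fun j => s j ==> (j \in reach6 (adj6 s f) x0)) enum6 = [forall i, forall j, s i ==> s j ==> connect (adj6 s f) i j]).
apply/allP/forallP => [H i|H j _].
  apply/forallP => j; apply/implyP => si; apply/implyP => sj.
  apply: (connect_trans (y := x0)).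
    rewrite (sym_connect_sym (adj6_sym s f)); apply: reach_conn.
    exact: (implyP (H i (mem_enum6 i)) si).
  by apply: reach_conn; exact: (implyP (H j (mem_enum6 j)) sj).
apply/implyP => sj; apply: conn_reach.
exact: (implyP (implyP (forallP (H x0) j) sx0) sj).
Qed.


Lemma card_count n (Q : pred nat) : #|[set k : 'I_n | Q k]| = count Q (iota 0 n).
Proof.
rewrite cardE /enum_mem -enumT size_filter -val_enum_ord count_map.
by apply: eq_count => k; rewrite /= inE.
Qed.

Lemma card_sets6 : #|{set 'I_6}| = 64.
Proof.
rewrite -cardsT.
have -> : [set: {set 'I_6}] = powerset [set: 'I_6].
  by apply/setP => S; rewrite !inE subsetT.
by rewrite card_powerset cardsT card_ord.
Qed.

Lemma bits_inj n k1 k2 : k1 < 2 ^ n -> k2 < 2 ^ n ->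
  (forall i, i < n -> odd (k1 %/ 2 ^ i) = odd (k2 %/ 2 ^ i)) -> k1 = k2.
Proof.
elim: n k1 k2 => [|n IH] k1 k2.
  by rewrite expn0; case: k1 => //; case: k2.
move=> h1 h2 H.
have o : odd k1 = odd k2 by have := H 0 isT; rewrite expn0 !divn1.
have hh : k1./2 = k2./2.
  apply: IH.
  - by rewrite -divn2; move: h1; rewrite expnS; lia.
  - by rewrite -divn2; move: h2; rewrite expnS; lia.
  - move=> i lt_in; have := H i.+1 lt_in.
    by rewrite expnS !divnMA !divn2.
by rewrite -(odd_double_half k1) -(odd_double_half k2) o hh.
Qed.

Fixpoint bitsh (n k : nat) : seq bool :=
  if n is n'.+1 then odd k :: bitsh n' k./2 else [::].
Lemma nth_bitsh n k i : i < n -> nth false (bitsh n k) i = odd (k %/ 2 ^ i).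
Proof.
elim: n k i => [|n IH] k [|i] //= hi; first by rewrite expn0 divn1.
by rewrite IH // expnS divnMA divn2.
Qed.

Definition mset (k : nat) : {set 'I_6} := [set i : 'I_6 | odd (k %/ 2 ^ i)].
Definition dec (k : 'I_4096) : {set 'I_6} * {set 'I_6} := (mset k, mset (k %/ 64)).

Lemma dec_inj : injective dec.
Proof.
move=> k1 k2 [/setP E1 /setP E2]; apply: val_inj.
apply: (bits_inj (n := 12)); [exact: ltn_ord | exact: ltn_ord |].
move=> i lt_i12; case: (ltnP i 6) => hi.
  by have := E1 (Ordinal hi); rewrite !inE.
have hi' : i - 6 < 6 by lia.
have e64 : 64 * 2 ^ (i - 6) = 2 ^ i.
  by rewrite -[in RHS](subnKC hi) expnD.
by have := E2 (Ordinal hi'); rewrite !inE /= -!divnMA e64.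
Qed.

Lemma dec_onto q : q \in codom dec.
Proof.
apply: (inj_card_onto dec_inj).
by rewrite card_prod card_sets6 card_ord.
Qed.

Definition tree6 (S F : {set 'I_6}) : bool :=
  tree6c (fun i => i \in S) (fun i => i \in F).

Definition Qk' (w : pred 'I_6) (bs : seq bool) : bool :=
  tree6c (fun i : 'I_6 => nth false bs i) (fun i : 'I_6 => nth false bs (i + 6)) &&
  all (fun i => w i ==> nth false bs i) enum6.
Definition Qk (w : pred 'I_6) (k : nat) : bool := Qk' w (bitsh 12 k).

Lemma Qk_dec w k : Qk w k = tree6 (mset k) (mset (k %/ 64)) && ([set i | w i] \subset mset k).
Proof.
rewrite /Qk /Qk' /tree6.
have E1 : (fun i : 'I_6 => i \in mset k) = (fun i : 'I_6 => nth false (bitsh 12 k) i).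
  apply: functional_extensionality => i; rewrite inE nth_bitsh //.
  by have := ltn_ord i; lia.
have E2 : (fun i : 'I_6 => i \in mset (k %/ 64)) = (fun i : 'I_6 => nth false (bitsh 12 k) (i + 6)).
  apply: functional_extensionality => i; rewrite inE nth_bitsh; last by have := ltn_ord i; lia.
  by rewrite addnC expnD -divnMA.
rewrite E1 E2; congr (_ && _); apply/allP/subsetP.
  move=> H i; rewrite inE => wi; have := implyP (H i (mem_enum6 i)) wi.
  by rewrite inE nth_bitsh //; have := ltn_ord i; lia.
move=> H i _; apply/implyP => wi; have := H i; rewrite !inE nth_bitsh; last by have := ltn_ord i; lia.
by apply.
Qed.

Lemma count_hex (w : pred 'I_6) :
  #|[set q : {set 'I_6} * {set 'I_6} | tree6 q.1 q.2 && ([set i | w i] \subset q.1)]| =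
  count (Qk w) (iota 0 4096).
Proof.
rewrite -card_count.
have -> : [set q : {set 'I_6} * {set 'I_6} | tree6 q.1 q.2 && ([set i | w i] \subset q.1)] =
    dec @: [set k : 'I_4096 | Qk w k].
  apply/setP => q; apply/idP/imsetP => [Hq|[k]].
    move: Hq; have /codomP[k ->] := dec_onto q; rewrite inE => Hq.
    by exists k => //; rewrite inE Qk_dec.
  by rewrite inE Qk_dec => H ->; rewrite inE.
rewrite card_imset //; exact: dec_inj.
Qed.

Lemma sc_neq i : sc i != i.
Proof. by case: i => -[|[|[|[|[|[|k]]]]]] Hk. Qed.
Lemma sc2_neq i : sc (sc i) != i.
Proof. by case: i => -[|[|[|[|[|[|k]]]]]] Hk. Qed.
Lemma adj_fin (i j : 'I_6) :
  ((i : nat) == (j + 1) %% 6) || ((j : nat) == (i + 1) %% 6) = (j == sc i) || (i == sc j).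
Proof.
by case: i => -[|[|[|[|[|[|k]]]]]] Hk; case: j => -[|[|[|[|[|[|l]]]]]] Hl.
Qed.
Definition pos6 (i0 i : 'I_6) : nat := (i + 5 - i0) %% 6.
Lemma pos6_inj i0 i j : pos6 i0 i = pos6 i0 j -> i = j.
Proof.
move=> E; apply: val_inj; move: E; rewrite /pos6.
by case: i0 => -[|[|[|[|[|[|k]]]]]] Hk; case: i => -[|[|[|[|[|[|l]]]]]] Hl;
   case: j => -[|[|[|[|[|[|p]]]]]] Hp.
Qed.
Lemma pos6_sc i0 i : i != i0 -> pos6 i0 (sc i) = (pos6 i0 i).+1.
Proof.
by case: i0 => -[|[|[|[|[|[|k]]]]]] Hk; case: i => -[|[|[|[|[|[|l]]]]]] Hl.
Qed.

Section Hex.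
Variables (d N m : nat).
Hypothesis hm : m < N.
Local Notation V := 'I_(6 * N).
Local Notation e := (@chain_adj d N).

Lemma gP (i : 'I_6) : 6 * m + i < 6 * N.
Proof. have := ltn_ord i; lia. Qed.
Definition g (i : 'I_6) : V := Ordinal (gP i).
Definition gi (x : V) : 'I_6 := inord (x - 6 * m).
Definition Hm : {set V} := [set x : V | 6 * m <= x < 6 * m + 6].
Definition h (i : 'I_6) : {set V} := [set g i; g (sc i)].

Lemma g_inj : injective g.
Proof. by move=> i j /(congr1 val) /= /eqP; rewrite eqn_add2l => /eqP /val_inj. Qed.
Lemma giK : cancel g gi.
Proof. by move=> i; apply: val_inj; rewrite /gi /= inordK; [lia | have := ltn_ord i; lia]. Qed.
Lemma g_in i : g i \in Hm.
Proof. by rewrite inE /=; have := ltn_ord i; lia. Qed.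
Lemma in_g x : x \in Hm -> exists i, x = g i.
Proof.
rewrite inE => hx; have hi : x - 6 * m < 6 by lia.
by exists (Ordinal hi); apply: val_inj => /=; lia.
Qed.

Lemma adj_g i j : e (g i) (g j) = (j == sc i) || (i == sc j).
Proof.
rewrite /chain_adj /=.
have q : forall k : 'I_6, (6 * m + k) %/ 6 = m by move=> k; have := ltn_ord k; lia.
have r : forall k : 'I_6, (6 * m + k) %% 6 = k by move=> k; have := ltn_ord k; lia.
by rewrite !q !r eqxx (ltn_eqF (ltnSn m)) /= orbF adj_fin.
Qed.

Lemma gsc_neq i : g i != g (sc i).
Proof. by rewrite (inj_eq g_inj) eq_sym sc_neq. Qed.

Lemma h_inj : injective h.
Proof.
move=> i j E; case: (set2_eq (gsc_neq i) E) => [[/g_inj -> _]|[/g_inj E1 /g_inj E2]] //.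
by have := sc2_neq j; rewrite -E1 E2 eqxx.
Qed.

Lemma h_edge i : is_edge e (h i).
Proof.
apply/existsP; exists (g i); apply/existsP; exists (g (sc i)).
by rewrite gsc_neq adj_g /h !eqxx.
Qed.

Section Transfer.
Variables (S F : {set 'I_6}).
Local Notation SS := (g @: S).
Local Notation FF := (h @: F).

Lemma t1 : (SS != set0) = has (fun i => i \in S) enum6.
Proof.
rewrite imset_eq0; apply/set0Pn/hasP => [[x xS]|[x _ xS]]; exists x => //.
exact: mem_enum6.
Qed.

Lemma t2 : is_subgraph e SS FF = all (fun i => (i \in F) ==> (i \in S) && (sc i \in S)) enum6.
Proof.
apply/forallP/allP => [H i _|H f].
  apply/implyP => iF; have := implyP (H (h i)) (imset_f _ iF).
  by rewrite subUset !sub1set !(mem_imset _ _ g_inj) => /andP[_ /andP[-> ->]].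
apply/implyP => /imsetP[i iF ->]; rewrite h_edge /= subUset !sub1set !(mem_imset _ _ g_inj).
exact: (implyP (H i (mem_enum6 i)) iF).
Qed.

Lemma t3 i j : sub_adj SS FF (g i) (g j) = adj6 (fun i => i \in S) (fun i => i \in F) i j.
Proof.
rewrite /sub_adj /adj6 /= !(mem_imset _ _ g_inj) (inj_eq g_inj).
case: (i \in S) => //; case: (j \in S) => //=.
case: (eqVneq i j) => [<-|ij] //=.
have gij : g i != g j by rewrite (inj_eq g_inj).
apply/imsetP/orP => [[k kF E]|[/andP[/eqP-> iF]|/andP[/eqP-> jF]]].
- case: (set2_eq gij E) => [[/g_inj-> /g_inj->]|[/g_inj-> /g_inj->]].
    by left; rewrite eqxx kF.
  by right; rewrite eqxx kF.
- by exists i.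
- by exists j => //; rewrite /h setUC.
Qed.

Lemma t4 : sub_connected SS FF = conn6 (fun i => i \in S) (fun i => i \in F).
Proof.
rewrite conn6_ok; apply/forallP/forallP => [H i|H x].
  apply/forallP => j; apply/implyP => iS; apply/implyP => jS.
  have := implyP (forallP (implyP (H (g i)) (imset_f _ iS)) (g j)) (imset_f _ jS).
  move/(connect_map (f := gi) (r' := adj6 (fun i => i \in S) (fun i => i \in F))).
  rewrite !giK; apply => a b rab.
  have /andP[/imsetP[a' _ Ea] /imsetP[b' _ Eb]] := sadj_mem rab.
  by move: rab; rewrite Ea Eb !giK t3.
apply/implyP => /imsetP[i iS ->]; apply/forallP => y; apply/implyP => /imsetP[j jS ->].
have := implyP (implyP (forallP (H i) j) iS) jS.
apply: connect_map => a b; by rewrite t3.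
Qed.

Lemma t5 : is_subgraph e SS FF -> sub_acyclic SS FF = has (fun i => i \notin F) enum6.
Proof.
move=> sg; case: (boolP (has _ enum6)) => [/hasP[i0 _ i0F]|nh].
  apply/forallP => k; apply/forallP => c; apply/implyP => k3; apply/negP => /andP[cy uc].
  have szc : 2 < size c by rewrite size_tuple.
  have cS : forall x, x \in c -> x \in SS.
    by move=> x xc; have /andP[] := sadj_mem (next_cycle cy xc).
  apply: (cycle_pot (pos := fun x => pos6 i0 (gi x)) uc cy szc).
    move=> x y xc yc /=.
    have /imsetP[i _ ->] := cS x xc; have /imsetP[j _ ->] := cS y yc.
    by rewrite !giK => /pos6_inj ->.
  move=> a b ac rab; have /andP[/imsetP[i _ Ea] /imsetP[j _ Eb]] := sadj_mem rab.
  move: rab; rewrite Ea Eb t3 !giK /adj6 => /and4P[_ _ _ /orP[/andP[/eqP-> iF]|/andP[/eqP-> jF]]].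
    left; apply: pos6_sc; apply/eqP => E; by rewrite -E iF in i0F.
  right; apply: pos6_sc; apply/eqP => E; by rewrite -E jF in i0F.
have Fall : forall i, i \in F.
  move=> i; apply/negPn/negP => iF; move/hasP: nh; apply; exists i => //; exact: mem_enum6.
have Sall : forall i, i \in S.
  move: sg; rewrite t2 => /allP H i.
  by have /andP[] := implyP (H i (mem_enum6 i)) (Fall i).
have h6 : 6 < #|V|.+1 by rewrite card_ord; lia.
have sz : size (map g enum6) == Ordinal h6 by rewrite size_map.
apply/negbTE/negP => /forallP/(_ (Ordinal h6))/forallP/(_ (Tuple sz))/implyP/(_ isT)/negP; apply.
change (cycle (sub_adj SS FF) (map g enum6) && uniq (map g enum6)).
rewrite (map_inj_uniq g_inj) andbT cycle_map.
rewrite (eq_cycle (e' := fun i j => (i != j) && ((j == sc i) || (i == sc j)))); first by [].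
by move=> i j /=; rewrite t3 /adj6 !Sall !Fall /= !andbT.
Qed.

Lemma transfer : is_subtree e SS FF = tree6 S F.
Proof.
rewrite /is_subtree /tree6 /tree6c t1 t4.
case sg: (is_subgraph e SS FF).
  by rewrite (t5 sg) -t2 sg.
by rewrite -t2 sg.
Qed.

End Transfer.
Definition Phi (q : {set 'I_6} * {set 'I_6}) : {set V} * {set {set V}} := (g @: q.1, h @: q.2).

Lemma hex_card (w : pred 'I_6) : #|Tr e Hm (g @: [set i | w i])| = count (Qk w) (iota 0 4096).
Proof.
rewrite -count_hex -(card_imset _ (f := Phi)); last first.
  by move=> [S1 F1] [S2 F2] [/(imset_inj g_inj) -> /(imset_inj h_inj) ->].
apply: eq_card => -[S F]; rewrite inE /=.
apply/idP/imsetP.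
  case/and3P => t sH WS.
  move: (t) => /and4P[_ sg _ _].
  set S' := [set i | g i \in S]; set F' := [set i | h i \in F].
  have ES : S = g @: S'.
    apply/setP => x; apply/idP/imsetP => [xS|[i]].
      by have [i xi] := in_g (subsetP sH _ xS); exists i => //; rewrite inE -xi.
    by rewrite inE => iS ->.
  have EF : F = h @: F'.
    apply/setP => f; apply/idP/imsetP => [fF|[i]]; last by rewrite inE => iF ->.
    have /andP[/existsP[a /existsP[b /andP[/andP[ab eab] /eqP fE]]] fS] := implyP (forallP sg f) fF.
    have aS : a \in S by apply: (subsetP fS); rewrite fE !inE eqxx.
    have bS : b \in S by apply: (subsetP fS); rewrite fE !inE eqxx orbT.
    have [i ai] := in_g (subsetP sH _ aS); have [j bj] := in_g (subsetP sH _ bS).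
    move: eab; rewrite ai bj adj_g => /orP[/eqP ji|/eqP ij].
      by exists i; rewrite ?inE /h -?ji -?ai -?bj -?fE // fE ai bj ji.
    by exists j; rewrite ?inE /h -?ij -?ai -?bj setUC -?fE // fE ai bj ij setUC.
  exists (S', F'); last by rewrite /Phi /= -ES -EF.
  rewrite inE /= -transfer -ES -EF t /=.
  by apply/subsetP => i wi; rewrite inE; apply: (subsetP WS); exact: imset_f.
case => -[S' F']; rewrite inE /= => /andP[tq WS'] [-> ->].
rewrite transfer tq /=; apply/andP; split; last exact: imsetS.
by apply/subsetP => x /imsetP[i _ ->]; exact: g_in.
Qed.

End Hex.

Section Chain.
Variables (d N : nat).
Hypotheses (d0 : 0 < d) (d6 : d < 6) (N0 : 0 < N).
Local Notation V := 'I_(6 * N).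
Local Notation e := (@chain_adj d N).

Lemma chain_sym : symmetric e.
Proof.
move=> x y; rewrite /chain_adj /=.
set i := x %/ 6; set j := y %/ 6; set a := x %% 6; set b := y %% 6.
rewrite [j == i]eq_sym [(b == (a + 1) %% 6) || _]orbC.
by case: [&& j == i.+1, a == d & b == 0]; case: [&& i == j.+1, b == d & a == 0];
  rewrite ?orbT ?orbF.
Qed.

Definition A m : {set V} := [set x : V | x < 6 * m].
Lemma v0P : 0 < 6 * N. Proof. lia. Qed.
Definition vx k : V := insubd (Ordinal v0P) k.
Lemma val_vx k : k < 6 * N -> val (vx k) = k.
Proof. by move=> hk; rewrite val_insubd hk. Qed.

Lemma Tr_empty (X : {set V}) w : w \notin X -> #|Tr e X [set w]| = 0.
Proof.
move=> wX; apply/eqP; rewrite cards_eq0; apply/eqP/setP => p; rewrite !inE.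
apply/negbTE/negP => /and3P[_ sX]; rewrite sub1set => wS.
by rewrite (subsetP sX _ wS) in wX.
Qed.

Section Step.
Variable m : nat.
Hypotheses (m1 : 0 < m) (mN : m < N).
Let u := vx (6 * (m - 1) + d).
Let v := vx (6 * m).

Lemma AH : A m :|: Hm N m = A m.+1.
Proof. by apply/setP => x; rewrite !inE; apply/idP/idP; lia. Qed.
Lemma dAB : [disjoint A m & Hm N m].
Proof. by rewrite disjoint_subset; apply/subsetP => x; rewrite !inE; lia. Qed.
Lemma uA : u \in A m.
Proof. by rewrite inE val_vx; lia. Qed.
Lemma vB : v \in Hm N m.
Proof. by rewrite inE val_vx; lia. Qed.
Lemma euv : e u v.
Proof.
by rewrite /chain_adj /= !val_vx; lia.
Qed.
Lemma bridge a b : a \in A m -> b \in Hm N m -> e a b -> a = u /\ b = v.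
Proof.
rewrite !inE => ha hb; rewrite /chain_adj /=.
case/or3P => [/andP[/eqP h1 _]|/and3P[/eqP h1 /eqP h2 /eqP h3]|/and3P[/eqP h1 _ _]]; try lia.
by split; apply: val_inj; rewrite /= val_vx; lia.
Qed.

Lemma s_step : #|Tr e (A m.+1) set0| =
  #|Tr e (A m) set0| + #|Tr e (Hm N m) set0| + #|Tr e (A m) [set u]| * #|Tr e (Hm N m) [set v]|.
Proof.
by rewrite -AH (bridge_count chain_sym dAB uA vB euv bridge (sub0set _)) setU0.
Qed.

Lemma b_step : #|Tr e (A m.+1) [set vx (6 * m + d)]| =
  #|Tr e (Hm N m) [set vx (6 * m + d)]| + #|Tr e (A m) [set u]| * #|Tr e (Hm N m) [set v; vx (6 * m + d)]|.
Proof.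
have sB : [set vx (6 * m + d)] \subset Hm N m by rewrite sub1set inE val_vx; lia.
rewrite -AH (bridge_count chain_sym dAB uA vB euv bridge sB) Tr_empty //.
by rewrite inE val_vx; lia.
Qed.
End Step.

Lemma A1 : A 1 = Hm N 0.
Proof. by apply/setP => x; rewrite !inE; apply/idP/idP; lia. Qed.

Lemma AN : A N = setT.
Proof. by apply/setP => x; rewrite !inE; have := ltn_ord x; lia. Qed.

Section HexVals.
Variable m : nat.
Hypothesis mN : m < N.
Let dd : 'I_6 := Ordinal d6.

Lemma g0 : g mN ord0 = vx (6 * m).
Proof. by apply: val_inj; rewrite val_vx /=; lia. Qed.
Lemma gd : g mN dd = vx (6 * m + d).
Proof. by apply: val_inj; rewrite val_vx /=; lia. Qed.

Lemma hv0 : #|Tr e (Hm N m) set0| = count (Qk (fun _ => false)) (iota 0 4096).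
Proof.
rewrite -(hex_card d mN); congr #|Tr _ _ _|.
by apply/setP => x; rewrite !inE; apply/esym/negbTE/negP => /imsetP[i]; rewrite inE.
Qed.

Lemma hv1 : #|Tr e (Hm N m) [set vx (6 * m)]| = count (Qk (fun i => i == ord0)) (iota 0 4096).
Proof.
rewrite -(hex_card d mN); congr #|Tr _ _ _|.
have -> : [set i : 'I_6 | i == ord0] = [set ord0] by apply/setP => i; rewrite !inE.
by rewrite imset_set1 g0.
Qed.

Lemma hvd : #|Tr e (Hm N m) [set vx (6 * m + d)]| = count (Qk (fun i => i == dd)) (iota 0 4096).
Proof.
rewrite -(hex_card d mN); congr #|Tr _ _ _|.
have -> : [set i : 'I_6 | i == dd] = [set dd] by apply/setP => i; rewrite !inE.
by rewrite imset_set1 gd.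
Qed.

Lemma hvb : #|Tr e (Hm N m) [set vx (6 * m); vx (6 * m + d)]| =
  count (Qk (fun i => (i == ord0) || (i == dd))) (iota 0 4096).
Proof.
rewrite -(hex_card d mN); congr #|Tr _ _ _|.
have -> : [set i : 'I_6 | (i == ord0) || (i == dd)] = [set ord0; dd] by apply/setP => i; rewrite !inE.
by rewrite imsetU1 imset_set1 g0 gd.
Qed.
End HexVals.

End Chain.

Import GRing.Theory Num.Theory.

Local Open Scope ring_scope.

Lemma solve (c : rat) (s b : nat -> rat) (n : nat) :
  c != 1 -> s 1%N = 36%:R -> b 1%N = 21%:R ->
  (forall m, (0 < m)%N -> (m < n)%N -> s m.+1 = s m + 36%:R + b m * 21%:R /\ b m.+1 = 21%:R + b m * c) ->
  (0 < n)%N ->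
  b n = 21%:R * (c ^+ n - 1) / (c - 1) /\
  s n = 36%:R * n%:R + 441%:R / (c - 1) * ((c ^+ n - c) / (c - 1) - n%:R + 1).
Proof.
move=> c1 s1 b1; have c10 : c - 1 != 0 by rewrite subr_eq0.
elim: n => [//|n IH] rec _.
case: n IH rec => [|n] IH rec.
  by rewrite s1 b1; split; field.
have [hb hs] := IH (fun m m0 mn => rec m m0 (ltnW mn)) isT.
have [rs rb] := rec n.+1 isT (ltnSn _).
rewrite rs rb hs hb !exprS; split.
  by field.
rewrite -[(n.+2)%:R]natr1 -[(n.+1)%:R]natr1.
by field.
Qed.

Lemma c36 : count (Qk (fun _ => false)) (iota 0 4096) = 36%N.
Proof. by vm_compute. Qed.
Lemma c21 : count (Qk (fun i => i == ord0)) (iota 0 4096) = 21%N.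
Proof. by vm_compute. Qed.

Lemma STN_Tr (V : finType) (e : rel V) : STN e = #|Tr e setT set0|.
Proof.
rewrite /STN; apply: eq_card => p; rewrite !inE.
by rewrite subsetT sub0set !andbT.
Qed.

Lemma chain_formula d (d0 : (0 < d)%N) (d6 : (d < 6)%N) (cb : nat)
  (Hcb : count (Qk (fun i => (i == ord0) || (i == Ordinal d6))) (iota 0 4096) = cb)
  (Hd : count (Qk (fun i => i == Ordinal d6)) (iota 0 4096) = 21%N)
  (cb1 : cb != 1%N) n (hn : (0 < n)%N) :
  (STN (@chain_adj d n))%:R = 36%:R * n%:R + 441%:R / (cb%:R - 1) * ((cb%:R ^+ n - cb%:R) / (cb%:R - 1) - n%:R + 1) :> rat.
Proof.
rewrite STN_Tr -(AN d0 d6 hn).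
pose s m := (#|Tr (@chain_adj d n) (A n m) set0|)%:R : rat.
pose b m := (#|Tr (@chain_adj d n) (A n m) [set vx d0 d6 hn (6 * (m - 1) + d)]|)%:R : rat.
have := @solve cb%:R s b n _ _ _ _ hn.
case=> //.
- by rewrite pnatr_eq1.
- by rewrite /s (A1 d0 d6 hn) (hv0 d hn) c36.
- by rewrite /b (A1 d0 d6 hn) subnn (hvd d0 d6 hn hn) Hd.
move=> m m0 mn; rewrite /s /b (s_step d0 d6 hn m0 mn) [(m.+1 - 1)%N]subSS subn0.
rewrite (b_step d0 d6 hn m0 mn).

rewrite (hv0 d mn) (hv1 d0 d6 hn mn) (hvd d0 d6 hn mn) (hvb d0 d6 hn mn) Hcb Hd c36 c21.
by rewrite !natrD !natrM; split.
Qed.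

Lemma cnt_o1 : count (Qk (fun i => (i == ord0) || (i == @Ordinal 6 1 isT))) (iota 0 4096) = 16%N.
Proof. by vm_compute. Qed.
Lemma cnt_o2 : count (Qk (fun i => i == @Ordinal 6 1 isT)) (iota 0 4096) = 21%N.
Proof. by vm_compute. Qed.
Lemma cnt_m1 : count (Qk (fun i => (i == ord0) || (i == @Ordinal 6 2 isT))) (iota 0 4096) = 13%N.
Proof. by vm_compute. Qed.
Lemma cnt_m2 : count (Qk (fun i => i == @Ordinal 6 2 isT)) (iota 0 4096) = 21%N.
Proof. by vm_compute. Qed.
Lemma cnt_p1 : count (Qk (fun i => (i == ord0) || (i == @Ordinal 6 3 isT))) (iota 0 4096) = 12%N.
Proof. by vm_compute. Qed.
Lemma cnt_p2 : count (Qk (fun i => i == @Ordinal 6 3 isT)) (iota 0 4096) = 21%N.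
Proof. by vm_compute. Qed.

Theorem corollary2 (n : nat) (hn : (1 <= n)%N) :
  [/\ (ortho_chain_STN n)%:R = 49%:R * (16%:R ^+ n - 1) / 25%:R + 33%:R * n%:R / 5%:R :> rat,
      (meta_chain_STN n)%:R = 49%:R * (13%:R ^+ n - 1) / 16%:R - 3%:R * n%:R / 4%:R :> rat
    & (para_chain_STN n)%:R = 441%:R * (12%:R ^+ n - 1) / 121%:R - 45%:R * n%:R / 11%:R :> rat].
Proof.
split.
- rewrite /ortho_chain_STN (@chain_formula 1 isT isT 16 cnt_o1 cnt_o2 isT n hn).
  by field.
- rewrite /meta_chain_STN (@chain_formula 2 isT isT 13 cnt_m1 cnt_m2 isT n hn).
  by field.
- rewrite /para_chain_STN (@chain_formula 3 isT isT 12 cnt_p1 cnt_p2 isT n hn).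
  by field.
Qed.
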